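(* The assignment $r\mapsto\mathfrak g(r)$ is a bijection between the set of normalized formal generalized $r$-matrices $r\in(\mathfrak g\otimes\mathfrak g)(\!(x)\!)[\![y]\!]$ and the set of Lie subalgebras $W\subseteq\mathfrak g(\!(z)\!)$ satisfying $\mathfrak g(\!(z)\!)=\mathfrak g[\![z]\!]\oplus W$ (direct sum of vector spaces).
   Context: $\Bbbk$ is a field of characteristic $0$, $\mathfrak g$ a finite-dimensional semisimple Lie algebra over $\Bbbk$ of dimension $d$ with Killing form $\kappa$, $\{b_i\}_{i=1}^d$ a $\kappa$-orthonormal basis and $\gamma=\sum_i b_i\otimes b_i$. $\frac{1}{x-y}$ denotes $\sum_{k\ge0}x^{-k-1}y^k\in\Bbbk(\!(x)\!)[\![y]\!]$. A series $r\in(\mathfrak g\otimes\mathfrak g)(\!(x)\!)[\![y]\!]$ is in standard form if $r(x,y)=\frac{\lambda(y)}{x-y}\gamma+r_0(x,y)$ with $\lambda\in\Bbbk[\![z]\!]^\times$, $r_0\in(\mathfrak g\otimes\mathfrak g)[\![x,y]\!]$; normalized if $\lambda=1$. Put $\bar r(x,y)=\frac{\lambda(x)}{x-y}\gamma-\tau(r_0(y,x))$ with $\tau$ the $\Bbbk[\![x,y]\!]$-linear extension of $a\otimes b\mapsto b\otimes a$. For $s\in(\mathfrak g\otimes\mathfrak g)(\!(x)\!)[\![y]\!]$ and $ij\in\{12,13,23\}$, $s^{ij}$ is the element of $(U(\mathfrak g)^{\otimes3})\otimes\Bbbk(\!(x_1)\!)(\!(x_2)\!)[\![x_3]\!]$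 obtained by substituting $(x,y)=(x_i,x_j)$ and placing the tensor factors in positions $i,j$. A (normalized) formal generalized $r$-matrix is a series in (normalized) standard form with $[r^{12},r^{13}]+[r^{12},r^{23}]+[r^{13},\bar r^{23}]=0$. For $s=\sum_{k\ge0}\sum_{i=1}^d s_{k,i}(x)\otimes b_iy^k$ (with $s_{k,i}\in\mathfrak g(\!(x)\!)$), $\mathfrak g(s):=\mathrm{span}_\Bbbk\{s_{k,i}(z)\}\subseteq\mathfrak g(\!(z)\!)$. *)

(* Defs.v *)
From HB Require Import structures.
From mathcomp Require Import all_boot all_order all_algebra.
Set Implicit Arguments. Unset Strict Implicit. Unset Printing Implicit Defensive.
Import Order.TTheory GRing.Theory Num.Theory.
Local Open Scope ring_scope.

(* The Lie algebra g: k^d with bracket given by structure constants    *)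
(* c w.r.t. the standard basis e_i = delta_mx 0 i, which plays the     *)
(* role of the kappa-orthonormal basis {b_i}.                          *)
(*   [e_i, e_j] = \sum_p c i j p e_p                                   *)

Definition ebasis (K : fieldType) (d : nat) (i : 'I_d) : 'rV[K]_d := delta_mx 0 i.

Definition lie (K : fieldType) (d : nat) (c : 'I_d -> 'I_d -> 'I_d -> K)
  (u v : 'rV[K]_d) : 'rV[K]_d :=
  \sum_(i < d) \sum_(j < d) (u 0 i * v 0 j) *: (\row_p c i j p).

Definition is_lie_algebra (K : fieldType) (d : nat) (c : 'I_d -> 'I_d -> 'I_d -> K) : Prop :=
  (forall u, lie c u u = 0) /\
  (forall u v w, lie c u (lie c v w) + lie c v (lie c w u) + lie c w (lie c u v) = 0).

(* matrix of ad u acting on row vectors: v *m ad_mx u = [u, v] *)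
Definition ad_mx (K : fieldType) (d : nat) (c : 'I_d -> 'I_d -> 'I_d -> K)
  (u : 'rV[K]_d) : 'M[K]_d :=
  \matrix_(i, j) (lie c u (ebasis K i)) 0 j.

Definition killing (K : fieldType) (d : nat) (c : 'I_d -> 'I_d -> 'I_d -> K)
  (u v : 'rV[K]_d) : K :=
  \tr (ad_mx c v *m ad_mx c u).

(* semisimple: no nonzero abelian ideal (equivalently Rad g = 0) *)
Definition semisimple (K : fieldType) (d : nat) (c : 'I_d -> 'I_d -> 'I_d -> K) : Prop :=
  forall I : {vspace 'rV[K]_d},
    (forall u v, v \in I -> lie c u v \in I) ->
    (forall u v, u \in I -> v \in I -> lie c u v = 0) ->
    I = 0%VS.

Definition killing_orthonormal (K : fieldType) (d : nat)
  (c : 'I_d -> 'I_d -> 'I_d -> K) : Prop :=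
  forall i j : 'I_d, killing c (ebasis K i) (ebasis K j) = (i == j)%:R.

(* Series.  An element s of (g (x) g)((x))[[y]] is given by its        *)
(* coefficients: s k n : 'M_d is the coefficient of y^k x^n, where an   *)
(* element of g (x) g is a d x d matrix M meaning sum M i j e_i (x) e_j. *)
(* So gamma = sum e_i (x) e_i is 1%:M and tau is transposition.        *)

(* finite sum over the integer interval [lo, hi] (empty if hi < lo) *)
Definition isum (V : nmodType) (lo hi : int) (F : int -> V) : V :=
  \sum_(i < absz (hi - lo + 1)) (if lo + (i : nat)%:Z <= hi then F (lo + (i : nat)%:Z) else 0).

(* coefficient of y^k x^n in lambda(y)/(x-y) = sum_k sum_{j<=k} lambda_{k-j} x^{-j-1} y^k *)
Definition cauchy_y (K : fieldType) (lam : nat -> K) (k : nat) (n : int) : K :=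
  let m := (- n - 1)%R in
  if (0 <= m) && (m <= k%:Z) then lam (k - absz m)%N else 0.

(* coefficient of y^k x^n in lambda(x)/(x-y) = sum_j sum_k lambda_j x^{j-k-1} y^k *)
Definition cauchy_x (K : fieldType) (lam : nat -> K) (k : nat) (n : int) : K :=
  if 0 <= n + k%:Z + 1 then lam (absz (n + k%:Z + 1)) else 0.

(* r is in standard form r = lambda(y)/(x-y) gamma + r0(x,y) with       *)
(* lambda in k[[z]]^x (i.e. lambda_0 <> 0) and r0 i j the coefficient   *)
(* of x^i y^j of r0 in (g (x) g)[[x,y]].                                *)
Definition standard_form (K : fieldType) (d : nat)
  (r : nat -> int -> 'M[K]_d) (lam : nat -> K) (r0 : nat -> nat -> 'M[K]_d) : Prop :=
  lam 0%N != 0 /\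
  forall (k : nat) (n : int),
    r k n = cauchy_y lam k n *: 1%:M + (if 0 <= n then r0 (absz n) k else 0).

(* coefficients (y^k x^n) of rbar(x,y) = lambda(x)/(x-y) gamma - tau(r0(y,x)) *)
Definition rbar (K : fieldType) (d : nat) (lam : nat -> K) (r0 : nat -> nat -> 'M[K]_d)
  (k : nat) (n : int) : 'M[K]_d :=
  cauchy_x lam k n *: 1%:M - (if 0 <= n then (r0 k (absz n))^T else 0).

(* The three commutators, computed in g (x) g (x) g ⊂ U(g)^{(x)3}, as   *)
(* the coefficient of x1^n1 x2^n2 x3^k3 in k((x1))((x2))[[x3]], tensor *)
(* component e_p (x) e_q (x) e_t.  Finite ranges are exact since series *)
(* in standard form have coefficient 0 at y^k x^n whenever n < -k-1.   *)
Definition cybe_term1 (K : fieldType) (d : nat) (c : 'I_d -> 'I_d -> 'I_d -> K)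
  (s : nat -> int -> 'M[K]_d) (n1 n2 : int) (k3 : nat) (p q t : 'I_d) : K :=
  (* [r^12, r^13] *)
  if n2 < 0 then 0 else
  isum (- n2 - 1) (n1 + k3%:Z + 1) (fun a =>
    \sum_(i < d) \sum_(l < d) (s (absz n2) a) i q * (s k3 (n1 - a)) l t * c i l p).

Definition cybe_term2 (K : fieldType) (d : nat) (c : 'I_d -> 'I_d -> 'I_d -> K)
  (s : nat -> int -> 'M[K]_d) (n1 n2 : int) (k3 : nat) (p q t : 'I_d) : K :=
  (* [r^12, r^23] *)
  isum 0 (n2 + k3%:Z + 1) (fun b =>
    \sum_(j < d) \sum_(l < d) (s (absz b) n1) p j * (s k3 (n2 - b)) l t * c j l q).

Definition cybe_term3 (K : fieldType) (d : nat) (c : 'I_d -> 'I_d -> 'I_d -> K)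
  (s sb : nat -> int -> 'M[K]_d) (n1 n2 : int) (k3 : nat) (p q t : 'I_d) : K :=
  (* [r^13, rbar^23] *)
  \sum_(k < k3.+1) \sum_(m < d) \sum_(u < d)
     (s k n1) p m * (sb (k3 - k)%N n2) q u * c m u t.

Definition gen_cybe (K : fieldType) (d : nat) (c : 'I_d -> 'I_d -> 'I_d -> K)
  (s sb : nat -> int -> 'M[K]_d) : Prop :=
  forall (n1 n2 : int) (k3 : nat) (p q t : 'I_d),
    cybe_term1 c s n1 n2 k3 p q t + cybe_term2 c s n1 n2 k3 p q t
    + cybe_term3 c s sb n1 n2 k3 p q t = 0.

Definition formal_gen_rmatrix (K : fieldType) (d : nat) (c : 'I_d -> 'I_d -> 'I_d -> K)
  (r : nat -> int -> 'M[K]_d) : Prop :=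
  exists (lam : nat -> K) (r0 : nat -> nat -> 'M[K]_d),
    standard_form r lam r0 /\ gen_cybe c r (rbar lam r0).

Definition lam_one (K : fieldType) : nat -> K := fun j => (j == 0%N)%:R.

Definition normalized_formal_gen_rmatrix (K : fieldType) (d : nat)
  (c : 'I_d -> 'I_d -> 'I_d -> K) (r : nat -> int -> 'M[K]_d) : Prop :=
  exists r0 : nat -> nat -> 'M[K]_d,
    standard_form r (lam_one K) r0 /\ gen_cybe c r (rbar (lam_one K) r0).

(* g((z)) : functions f : int -> 'rV_d (f n = coefficient of z^n) with *)
(* support bounded below; g[[z]] : those vanishing at negative n.       *)
(* Subsets of g((z)) are predicates.                                    *)

Definition laurent (K : fieldType) (d : nat) (f : int -> 'rV[K]_d) : Prop :=
  exists N : int, forall n, n < N -> f n = 0.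

Definition taylor (K : fieldType) (d : nat) (f : int -> 'rV[K]_d) : Prop :=
  forall n : int, n < 0 -> f n = 0.

Definition vanish_below (K : fieldType) (d : nat) (N : nat) (f : int -> 'rV[K]_d) : Prop :=
  forall n : int, n < - N%:Z -> f n = 0.

(* bracket of g((z)) : [f,g](n) = sum_{a+b=n} [f a, g b]; exact when f, g *)
(* vanish below -N. *)
Definition lbr (K : fieldType) (d : nat) (c : 'I_d -> 'I_d -> 'I_d -> K)
  (N : nat) (f g : int -> 'rV[K]_d) (n : int) : 'rV[K]_d :=
  isum (- N%:Z) (n + N%:Z) (fun a => lie c (f a) (g (n - a))).

Definition lie_subalgebra (K : fieldType) (d : nat) (c : 'I_d -> 'I_d -> 'I_d -> K)
  (W : (int -> 'rV[K]_d) -> Prop) : Prop :=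
  [/\ (forall f, W f -> laurent f),
      W (fun _ => 0),
      (forall f g, W f -> W g -> W (fun n => f n + g n)),
      (forall (a : K) f, W f -> W (fun n => a *: f n)) &
      (forall f g (N : nat), W f -> W g -> vanish_below N f -> vanish_below N g ->
         W (lbr c N f g))].

Definition taylor_complement (K : fieldType) (d : nat) (W : (int -> 'rV[K]_d) -> Prop) : Prop :=
  (forall f, laurent f ->
     exists p w, [/\ taylor p, W w & forall n, f n = p n + w n]) /\
  (forall w, W w -> taylor w -> forall n, w n = 0).

(* g(s) = span_K { s_{k,i}(z) }, where s = sum_k sum_i s_{k,i}(x) (x) b_i y^k, *)
(* i.e. s_{k,i} has z^n-coefficient the i-th column of s k n.           *)
Definition gspan (K : fieldType) (d : nat) (s : nat -> int -> 'M[K]_d)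
  (f : int -> 'rV[K]_d) : Prop :=
  exists (m : nat) (ks : 'I_m -> nat) (ids : 'I_m -> 'I_d) (cs : 'I_m -> K),
    forall n : int, f n = \sum_(t < m) cs t *: (\row_j (s (ks t) n) j (ids t)).

(* Main.v *)
Require Import Defs.
From HB Require Import structures.
From mathcomp Require Import all_boot all_order all_algebra zify ring.
From Stdlib Require Import FunctionalExtensionality ClassicalEpsilon.
Import Order.TTheory GRing.Theory Num.Theory.
Local Open Scope ring_scope.
Set Implicit Arguments. Unset Strict Implicit. Unset Printing Implicit Defensive.

Definition ord0_elim (T : Type) (t : 'I_0) : T.
Proof. by case: t. Defined.

Definition lclosed (K : fieldType) (d : nat) (P : (int -> 'rV[K]_d) -> Prop) :=
  [/\ P (fun _ => 0), (forall f g, P f -> P g -> P (fun n => f n + g n)) &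
      (forall (a : K) f, P f -> P (fun n => a *: f n))].

Lemma lclosed_sum (K : fieldType) (d : nat) (P : (int -> 'rV[K]_d) -> Prop) m
  (F : 'I_m -> int -> 'rV[K]_d) :
  lclosed P -> (forall t, P (F t)) -> P (fun n => \sum_(t < m) F t n).
Proof.
move=> [P0 PD PZ]; elim: m F => [|m IH] F HF.
  replace (fun n => \sum_(t < 0) F t n) with (fun _ : int => 0 : 'rV[K]_d) => //.
  by apply: functional_extensionality => n; rewrite big_ord0.
replace (fun n => \sum_(t < m.+1) F t n) with
   (fun n => \sum_(t < m) F (widen_ord (leqnSn m) t) n + F ord_max n).
  2: by apply: functional_extensionality => n; rewrite big_ord_recr.
by apply: PD => //; apply: IH.
Qed.

Lemma lclosed_isum (K : fieldType) (d : nat) (P : (int -> 'rV[K]_d) -> Prop) lo hi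
  (G : int -> int -> 'rV[K]_d) :
  lclosed P -> (forall b, P (G b)) -> P (fun n => isum lo hi (fun b => G b n)).
Proof.
move=> hP HG; rewrite /isum.
apply: (lclosed_sum (F := fun t n => if lo + (nat_of_ord t)%:Z <= hi then G (lo + (nat_of_ord t)%:Z) n else 0) hP) => t.
by case: (lo + (nat_of_ord t)%:Z <= hi); [apply: HG | case: hP].
Qed.

Lemma lclosed_sub (K : fieldType) (d : nat) (P : (int -> 'rV[K]_d) -> Prop) f g :
  lclosed P -> P f -> P g -> P (fun n => f n - g n).
Proof.
move=> [P0 PD PZ] hf hg.
replace (fun n => f n - g n) with (fun n => f n + (-1) *: g n).
  2: by apply: functional_extensionality => n; rewrite scaleN1r.
by apply: PD => //; apply: PZ.
Qed.

Definition bas (K : fieldType) (d : nat) (s : nat -> int -> 'M[K]_d) (k : nat) (i : 'I_d)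
  : int -> 'rV[K]_d := fun n => \row_j (s k n) j i.

Lemma gspan_closed (K : fieldType) (d : nat) (s : nat -> int -> 'M[K]_d) : lclosed (gspan s).
Proof.
split.
- exists 0%N, (fun _ => 0%N), (@ord0_elim 'I_d), (fun _ => 0).
  by move=> n; rewrite big_ord0.
- move=> f g [m1 [k1 [i1 [c1 H1]]]] [m2 [k2 [i2 [c2 H2]]]].
  exists (m1 + m2)%N,
   (fun t => match split t with inl a => k1 a | inr b => k2 b end),
   (fun t => match split t with inl a => i1 a | inr b => i2 b end),
   (fun t => match split t with inl a => c1 a | inr b => c2 b end).
  move=> n; rewrite big_split_ord /= H1 H2; congr (_ + _); apply: eq_bigr => t _.
  + by rewrite (unsplitK (inl t)).
  + by rewrite (unsplitK (inr t)).
- move=> a f [m [k [i [cs H]]]]; exists m, k, i, (fun t => a * cs t) => n.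
  by rewrite H scaler_sumr; apply: eq_bigr => t _; rewrite scalerA.
Qed.

Lemma gspan_bas (K : fieldType) (d : nat) (s : nat -> int -> 'M[K]_d) k i :
  gspan s (bas s k i).
Proof.
exists 1%N, (fun _ => k), (fun _ => i), (fun _ => 1) => n.
by rewrite big_ord1 scale1r.
Qed.

Lemma gspan_sub (K : fieldType) (d : nat) (s : nat -> int -> 'M[K]_d)
  (P : (int -> 'rV[K]_d) -> Prop) :
  lclosed P -> (forall k i, P (bas s k i)) -> forall f, gspan s f -> P f.
Proof.
move=> hP hb f [m [k [i [cs H]]]].
replace f with (fun n => \sum_(t < m) (fun t n => cs t *: bas s (k t) (i t) n) t n).
  2: by apply: functional_extensionality => n; rewrite H.
apply: (lclosed_sum hP) => t; case: hP => _ _ PZ; exact: PZ.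
Qed.
Lemma isum_wide (V : nmodType) (lo hi B : int) (T : nat) (F : int -> V) :
  B <= lo -> hi < B + T%:Z ->
  isum lo hi F = \sum_(i < T) (if (lo <= B + (i : nat)%:Z) && (B + (i : nat)%:Z <= hi)
                                then F (B + (i : nat)%:Z) else 0).
Proof.
move=> hB hT; have [hlt|hge] := ltP hi lo.
  rewrite /isum big1; last by move=> i _; case: ifP => // h; exfalso; lia.
  by rewrite big1 // => i _; case: ifP => // /andP [h1 h2]; exfalso; lia.
set L := absz (hi - lo + 1); set s := absz (lo - B).
have hsL : (s + L <= T)%N by rewrite /s /L; lia.
rewrite -(big_mkord xpredT (fun i => if (lo <= B + i%:Z) && (B + i%:Z <= hi) then F (B + i%:Z) else 0)).
rewrite (@big_cat_nat _ _ _ s 0%N T) //=; last by lia.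
rewrite (@big_cat_nat _ _ _ (s + L)%N s T) //=; last by lia.
rewrite big_nat_cond big1 ?add0r; last first.
  by move=> i /andP [/andP [_ hi'] _]; case: ifP => // /andP [h1 h2]; exfalso; lia.
rewrite [X in _ + X]big_nat_cond [X in _ + X]big1 ?addr0; last first.
  by move=> i /andP [/andP [hi1 hi2] _]; case: ifP => // /andP [h1 h2]; exfalso; lia.
rewrite -{1}(add0n s) big_addn addKn big_mkord /isum.
apply: eq_bigr => i _.
have -> : B + (i + s)%N%:Z = lo + (i : nat)%:Z by rewrite /s; lia.
have -> : (lo <= lo + (i : nat)%:Z) = true by lia.
by [].
Qed.

Lemma isum_window (V : nmodType) (lo hi lo' hi' : int) (F : int -> V) :
  lo' <= lo -> hi <= hi' ->
  (forall a, lo' <= a -> a <= hi' -> (a < lo) \/ (hi < a) -> F a = 0) ->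
  isum lo' hi' F = isum lo hi F.
Proof.
move=> h1 h2 HF.
rewrite (@isum_wide _ lo' hi' lo' (absz (hi' - lo')).+1); [|lia|lia].
rewrite (@isum_wide _ lo hi lo' (absz (hi' - lo')).+1); [|lia|lia].
apply: eq_bigr => i _.
case: ifP => /= ha; case: ifP => /= hb //.
- case/andP: ha => ha1 ha2; apply: (HF (lo' + (i : nat)%:Z)) => //.
  have : ~~ ((lo <= lo' + (i : nat)%:Z) && (lo' + (i : nat)%:Z <= hi)) by rewrite hb.
  by rewrite negb_and -!ltNge => /orP [h|h]; [left|right].
- exfalso; case/andP: hb => hb1 hb2; move/negbT: ha; rewrite negb_and -!ltNge.
  by case/orP => h; lia.
Qed.

Lemma isum_point (V : nmodType) (lo hi a0 : int) (F : int -> V) :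
  (forall a, lo <= a -> a <= hi -> a != a0 -> F a = 0) ->
  isum lo hi F = if (lo <= a0) && (a0 <= hi) then F a0 else 0.
Proof.
move=> HF; rewrite /isum; case: ifP => [/andP [h1 h2]|h].
  have hj : (absz (a0 - lo)%R < absz (hi - lo + 1)%R)%N by lia.
  rewrite (bigD1 (Ordinal hj)) //= big1 ?addr0.
    have -> : lo + (absz (a0 - lo))%:Z = a0 by lia.
    by rewrite h2.
  move=> i hne; case: ifP => // h3; apply: HF; try lia; apply/eqP => e.
  move/eqP: hne; apply; apply/val_inj => /=; lia.
rewrite big1 // => i _; case: ifP => // h2; apply: HF; lia.
Qed.

Lemma isum_add (V : nmodType) lo hi (F G : int -> V) :
  isum lo hi (fun a => F a + G a) = isum lo hi F + isum lo hi G.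
Proof. rewrite /isum -big_split; by apply: eq_bigr => i _; case: ifP => _ /=; rewrite ?addr0. Qed.

Lemma isum_sum (V : nmodType) lo hi m (F : 'I_m -> int -> V) :
  isum lo hi (fun a => \sum_(t < m) F t a) = \sum_(t < m) isum lo hi (F t).
Proof.
rewrite /isum exchange_big; apply: eq_bigr => i _; case: ifP => // _.
by rewrite big1.
Qed.

Lemma isum_scale (R : pzRingType) (V : lmodType R) lo hi (x : R) (F : int -> V) :
  isum lo hi (fun a => x *: F a) = x *: isum lo hi F.
Proof. by rewrite /isum scaler_sumr; apply: eq_bigr => i _; case: ifP; rewrite ?scaler0. Qed.

Lemma isum_mull (R : pzRingType) lo hi (x : R) (F : int -> R) :
  isum lo hi (fun a => x * F a) = x * isum lo hi F.
Proof. by rewrite /isum mulr_sumr; apply: eq_bigr => i _; case: ifP; rewrite ?mulr0. Qed.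

Lemma isum_mxE (R : pzRingType) m n lo hi (F : int -> 'M[R]_(m, n)) i j :
  (isum lo hi F) i j = isum lo hi (fun a => F a i j).
Proof. by rewrite /isum summxE; apply: eq_bigr => t _; case: ifP; rewrite ?mxE. Qed.

Lemma isum_ext (V : nmodType) lo hi (F G : int -> V) :
  (forall a, F a = G a) -> isum lo hi F = isum lo hi G.
Proof. by move=> h; rewrite /isum; apply: eq_bigr => i _; rewrite h. Qed.
Lemma sum_delta (R : pzSemiRingType) d (a : 'I_d) (F : 'I_d -> R) :
  \sum_(i < d) (a == i)%:R * F i = F a.
Proof.
rewrite (bigD1 a) //= eqxx mul1r big1 ?addr0 // => i /negbTE.
by rewrite eq_sym => ->; rewrite mul0r.
Qed.

Lemma ebasisE (K : fieldType) d (i j : 'I_d) : ebasis K i 0 j = (i == j)%:R.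
Proof. by rewrite /ebasis mxE eq_sym. Qed.

Section LieFacts.
Variables (K : fieldType) (d : nat) (c : 'I_d -> 'I_d -> 'I_d -> K).
End LieFacts.

Lemma lie_entry (K : fieldType) d (c : 'I_d -> 'I_d -> 'I_d -> K) u v p :
  lie c u v 0 p = \sum_i \sum_j u 0 i * v 0 j * c i j p.
Proof.
by rewrite /lie summxE; apply: eq_bigr => i _; rewrite summxE; apply: eq_bigr => j _; rewrite !mxE.
Qed.

Lemma lie_bas (K : fieldType) d (c : 'I_d -> 'I_d -> 'I_d -> K) i j p :
  lie c (ebasis K i) (ebasis K j) 0 p = c i j p.
Proof.
rewrite lie_entry; under eq_bigr => a _ do under eq_bigr => b _ do rewrite !ebasisE -mulrA.
under eq_bigr => a _ do rewrite -mulr_sumr.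
by rewrite sum_delta sum_delta.
Qed.

Lemma lie_addl (K : fieldType) d (c : 'I_d -> 'I_d -> 'I_d -> K) u u' v :
  lie c (u + u') v = lie c u v + lie c u' v.
Proof.
apply/rowP => p; rewrite mxE !lie_entry -big_split; apply: eq_bigr => i _.
by rewrite -big_split; apply: eq_bigr => j _; rewrite mxE !mulrDl.
Qed.

Lemma lie_addr (K : fieldType) d (c : 'I_d -> 'I_d -> 'I_d -> K) u v v' :
  lie c u (v + v') = lie c u v + lie c u v'.
Proof.
apply/rowP => p; rewrite mxE !lie_entry -big_split; apply: eq_bigr => i _.
by rewrite -big_split; apply: eq_bigr => j _; rewrite mxE mulrDr !mulrDl.
Qed.

Lemma lie_scalel (K : fieldType) d (c : 'I_d -> 'I_d -> 'I_d -> K) a u v :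
  lie c (a *: u) v = a *: lie c u v.
Proof.
apply/rowP => p; rewrite mxE !lie_entry mulr_sumr; apply: eq_bigr => i _.
by rewrite mulr_sumr; apply: eq_bigr => j _; rewrite mxE !mulrA.
Qed.

Lemma lie_scaler (K : fieldType) d (c : 'I_d -> 'I_d -> 'I_d -> K) a u v :
  lie c u (a *: v) = a *: lie c u v.
Proof.
apply/rowP => p; rewrite mxE !lie_entry mulr_sumr; apply: eq_bigr => i _.
rewrite mulr_sumr; apply: eq_bigr => j _; rewrite mxE.
by rewrite mulrCA !mulrA.
Qed.

Lemma lie_anti (K : fieldType) d (c : 'I_d -> 'I_d -> 'I_d -> K) :
  is_lie_algebra c -> forall u v, lie c u v = - lie c v u.
Proof.
case=> h0 _ u v; have := h0 (u + v).
rewrite lie_addl !lie_addr !h0 add0r addr0 => /eqP; rewrite addr_eq0 => /eqP //.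
Qed.

Lemma lie_oppr (K : fieldType) d (c : 'I_d -> 'I_d -> 'I_d -> K) u v :
  lie c u (- v) = - lie c u v.
Proof. by rewrite -scaleN1r lie_scaler scaleN1r. Qed.

Lemma lie_jacobi (K : fieldType) d (c : 'I_d -> 'I_d -> 'I_d -> K) :
  is_lie_algebra c -> forall u v w,
  lie c (lie c u v) w = lie c u (lie c v w) - lie c v (lie c u w).
Proof.
move=> hl u v w; have [_ hj] := hl; have H := hj u v w.
rewrite (lie_anti hl w (lie c u v)) (lie_anti hl w u) lie_oppr in H.
by apply/esym/eqP; rewrite -subr_eq0; apply/eqP; exact H.
Qed.

Lemma ad_mul (K : fieldType) d (c : 'I_d -> 'I_d -> 'I_d -> K) u w :
  w *m ad_mx c u = lie c u w.
Proof.
apply/rowP => j; rewrite !mxE lie_entry.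
under eq_bigr => i _ do rewrite mxE lie_entry.
under eq_bigr => i _ do under eq_bigr => a _ do under eq_bigr => b _ do
  rewrite ebasisE (mulrC (u 0 a)) -mulrA.
under eq_bigr => i _ do under eq_bigr => a _ do rewrite sum_delta.
under eq_bigr => i _ do rewrite mulr_sumr.
rewrite exchange_big; apply: eq_bigr => a _; apply: eq_bigr => i _.
by rewrite mulrCA mulrA.
Qed.

Lemma ad_lie (K : fieldType) d (c : 'I_d -> 'I_d -> 'I_d -> K) :
  is_lie_algebra c -> forall u v,
  ad_mx c (lie c u v) = ad_mx c v *m ad_mx c u - ad_mx c u *m ad_mx c v.
Proof.
move=> hl u v; apply/row_matrixP => i; rewrite !rowE mulmxBr !mulmxA !ad_mul.
exact: lie_jacobi.
Qed.

Lemma killing_inv (K : fieldType) d (c : 'I_d -> 'I_d -> 'I_d -> K) :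
  is_lie_algebra c -> forall x y z,
  killing c (lie c x y) z = killing c x (lie c y z).
Proof.
move=> hl x y z; rewrite /killing !ad_lie // mulmxBr mulmxBl !raddfB /= !mulmxA.
congr (_ - _); rewrite mxtrace_mulC mulmxA //.
Qed.

Lemma killing_sym (K : fieldType) d (c : 'I_d -> 'I_d -> 'I_d -> K) u v :
  killing c u v = killing c v u.
Proof. by rewrite /killing mxtrace_mulC. Qed.

Lemma ad_lin (K : fieldType) d (c : 'I_d -> 'I_d -> 'I_d -> K) u :
  ad_mx c u = \sum_i u 0 i *: ad_mx c (ebasis K i).
Proof.
apply/matrixP => a b; rewrite summxE !mxE lie_entry.
apply: eq_bigr => i _; rewrite !mxE lie_bas.
rewrite (bigD1 a) //= big1 ?addr0; first by rewrite ebasisE eqxx mulr1.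
by move=> j /negbTE; rewrite ebasisE eq_sym => ->; rewrite mulr0 mul0r.
Qed.

Lemma killing_e (K : fieldType) d (c : 'I_d -> 'I_d -> 'I_d -> K) :
  killing_orthonormal c -> forall v p, killing c v (ebasis K p) = v 0 p.
Proof.
move=> hon v p; rewrite /killing (ad_lin c v) mulmx_sumr raddf_sum /=.
under eq_bigr => i _ do rewrite -scalemxAr linearZ /=.
rewrite -[RHS](sum_delta p (fun i => v 0 i)).
apply: eq_bigr => i _; rewrite -/(killing c _ _) hon eq_sym mulrC //.
Qed.

Lemma c_cyc (K : fieldType) d (c : 'I_d -> 'I_d -> 'I_d -> K) :
  is_lie_algebra c -> killing_orthonormal c -> forall i j p, c i j p = c j p i.
Proof.
move=> hl hon i j p; rewrite -lie_bas -(killing_e hon) killing_inv // killing_sym.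
by rewrite killing_e // lie_bas.
Qed.

Lemma c_anti (K : fieldType) d (c : 'I_d -> 'I_d -> 'I_d -> K) :
  is_lie_algebra c -> forall i j p, c i j p = - c j i p.
Proof.
by move=> hl i j p; rewrite -!lie_bas (lie_anti hl) mxE.
Qed.

Lemma cauchy_y_one (K : fieldType) k n :
  cauchy_y (lam_one K) k n = (n == - k%:Z - 1)%:R.
Proof.
rewrite /cauchy_y /lam_one; case: ifP => [/andP [h1 h2]|h].
  by case: eqP => e1; case: eqP => e2 //; exfalso; lia.
case: eqP => e //; exfalso; move/negbT: h; rewrite negb_and -!ltNge.
by case/orP; lia.
Qed.

Lemma cauchy_x_one (K : fieldType) k n :
  cauchy_x (lam_one K) k n = (n + k%:Z + 1 == 0)%:R.
Proof.
rewrite /cauchy_x /lam_one; case: ifP => h.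
  by case: eqP => e1; case: eqP => e2 //; exfalso; lia.
case: eqP => e //; exfalso; move/negbT: h; rewrite -ltNge; lia.
Qed.

Lemma rneg (K : fieldType) d (r : nat -> int -> 'M[K]_d) r0 :
  standard_form r (lam_one K) r0 -> forall k n, n < 0 ->
  r k n = (n == - k%:Z - 1)%:R *: 1%:M.
Proof.
move=> [_ hs] k n hn; rewrite hs cauchy_y_one.
have -> : (0 <= n) = false by lia.
by rewrite addr0.
Qed.

Lemma rpos (K : fieldType) d (r : nat -> int -> 'M[K]_d) r0 :
  standard_form r (lam_one K) r0 -> forall k n, 0 <= n ->
  r k n = r0 (absz n) k.
Proof.
move=> [_ hs] k n hn; rewrite hs cauchy_y_one hn.
have -> : (n == - k%:Z - 1) = false by lia.
by rewrite scale0r add0r.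
Qed.

Lemma rneg_entry (K : fieldType) d (r : nat -> int -> 'M[K]_d) r0 :
  standard_form r (lam_one K) r0 -> forall k n i j, n < 0 ->
  r k n i j = ((n == - k%:Z - 1) && (i == j))%:R.
Proof.
move=> hs k n i j hn; rewrite (rneg hs) // !mxE.
by case: (n == _); case: (i == j); rewrite /= ?mulr1 ?mulr0 ?mul1r ?mul0r.
Qed.

Lemma bas_neg (K : fieldType) d (r : nat -> int -> 'M[K]_d) r0 :
  standard_form r (lam_one K) r0 -> forall k i n, n < 0 ->
  bas r k i n = (n == - k%:Z - 1)%:R *: ebasis K i.
Proof.
move=> hs k i n hn; apply/rowP => j; rewrite !mxE (rneg_entry hs) //.
by case: (n == _); case: (j == i); rewrite /= ?mulr1 ?mulr0 ?mul1r ?mul0r.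
Qed.

Lemma sum2_pick (V : nmodType) (Kb d : nat) (a : nat) (ha : (a < Kb)%N) (b : 'I_d)
  (G : nat -> 'I_d -> V) :
  \sum_(k < Kb) \sum_(i < d) (if (a == k) && (b == i) then G k i else 0) = G a b.
Proof.
rewrite (bigD1 (Ordinal ha)) //= [X in _ + X]big1 ?addr0.
  rewrite (bigD1 b) //= !eqxx /= big1 ?addr0 // => i /negbTE.
  by rewrite eq_sym => ->.
move=> k hk; apply: big1 => i _; case: ifP => // /andP [/eqP e _]; exfalso.
by move/eqP: hk; apply; apply/val_inj.
Qed.

Lemma gspan_regroup (K : fieldType) d (s : nat -> int -> 'M[K]_d) f :
  gspan s f -> exists (Kb : nat) (C : nat -> 'I_d -> K),
    forall n, f n = \sum_(k < Kb) \sum_(i < d) C k i *: bas s k i n.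
Proof.
move=> [m [ks [ids [cs H]]]].
exists (\max_(t < m) ks t).+1,
  (fun k i => \sum_(t < m | (ks t == k) && (ids t == i)) cs t) => n.
rewrite H; symmetry.
under eq_bigr => k _ do under eq_bigr => i _ do rewrite scaler_suml big_mkcond.
under eq_bigr => k _ do rewrite exchange_big.
rewrite exchange_big; apply: eq_bigr => t _.
have ht : (ks t < (\max_(t0 < m) ks t0).+1)%N by rewrite ltnS; exact: leq_bigmax.
rewrite -(@sum2_pick _ _ _ _ ht (ids t) (fun k i => cs t *: bas s k i n)).
apply: eq_bigr => k _; apply: eq_bigr => i _.
by case: ifP => h //=; rewrite h.
Qed.

Lemma sum2_pickM (R : pzSemiRingType) (Kb d a : nat) (ha : (a < Kb)%N) (b : 'I_d)
  (F : nat -> 'I_d -> R) (P : nat -> 'I_d -> bool) :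
  (forall k i, P k i = (a == k) && (b == i)) ->
  \sum_(k < Kb) \sum_(i < d) F k i * (P k i)%:R = F a b.
Proof.
move=> HP; rewrite -(sum2_pick ha b F); apply: eq_bigr => k _; apply: eq_bigr => i _.
by rewrite HP; case: (_ && _); rewrite ?mulr1 ?mulr0.
Qed.

Lemma eqZ_neg1 (k k' : nat) : (- k%:Z - 1 == - k'%:Z - 1) = (k == k').
Proof. by case: eqP => e1; case: eqP => e2 //; exfalso; lia. Qed.

Lemma nstd_unique (K : fieldType) d (r : nat -> int -> 'M[K]_d) r0 :
  standard_form r (lam_one K) r0 -> forall w, gspan r w -> taylor w -> forall n, w n = 0.
Proof.
move=> hs w hw ht; have [Kb [C H]] := gspan_regroup hw.
have HC : forall (k : 'I_Kb) i, C k i = 0.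
  move=> k i; have hk : w (- (k : nat)%:Z - 1) = 0 by apply: ht; lia.
  move: hk; rewrite H.
  move/(congr1 (fun v : 'rV_d => v 0 i)); rewrite summxE mxE => <-; symmetry.
  have E : forall (k' : 'I_Kb) i', (C k' i' *: bas r k' i' (- (k : nat)%:Z - 1)) 0 i =
     C k' i' * (((k : nat) == k') && (i == i'))%:R.
    move=> k' i'; rewrite mxE (bas_neg hs); last by lia.
    rewrite mxE ebasisE eqZ_neg1 [i' == i]eq_sym.
    by rewrite -natrM mulnb.
  rewrite (eq_bigr (fun k' : 'I_Kb => \sum_(i' < d) C k' i' * (((k:nat) == k') && (i == i'))%:R));
    last by move=> k' _; rewrite summxE; apply: eq_bigr => i' _; exact: E.
  exact: (@sum2_pickM _ _ _ _ (ltn_ord k) i (fun k i => C k i)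
            (fun k' i' => ((k:nat) == k') && (i == i')) (fun _ _ => erefl)).
move=> n; rewrite H; apply: big1 => k _; apply: big1 => i _.
by rewrite HC scale0r.
Qed.

Lemma nstd_laurent (K : fieldType) d (r : nat -> int -> 'M[K]_d) r0 :
  standard_form r (lam_one K) r0 -> forall f, gspan r f -> laurent f.
Proof.
move=> hs f hf; have [Kb [C H]] := gspan_regroup hf.
exists (- Kb%:Z) => n hn; rewrite H; apply: big1 => k _; apply: big1 => i _.
rewrite (bas_neg hs); last by lia.
have -> : (n == - (k : nat)%:Z - 1) = false by have := ltn_ord k; lia.
by rewrite scale0r scaler0.
Qed.

Lemma nstd_decomp (K : fieldType) d (r : nat -> int -> 'M[K]_d) r0 :
  standard_form r (lam_one K) r0 -> forall f, laurent f ->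
  exists p w, [/\ taylor p, gspan r w & forall n, f n = p n + w n].
Proof.
move=> hs f [N hN]; set Kb := absz N.
set w := fun n => \sum_(k < Kb) \sum_(i < d) f (- (k : nat)%:Z - 1) 0 i *: bas r k i n.
exists (fun n => f n - w n), w; split; last by move=> n; rewrite subrK.
- move=> n hn; apply/eqP; rewrite subr_eq0; apply/eqP/rowP => j.
  rewrite /w summxE.
  have E : forall (k : 'I_Kb),
      (\sum_(i0 < d) f (- (k : nat)%:Z - 1) 0 i0 *: bas r k i0 n) 0 j =
      \sum_(i0 < d) f (- (k : nat)%:Z - 1) 0 i0 * ((absz (- n - 1) == k) && (j == i0))%:R.
    move=> k; rewrite summxE; apply: eq_bigr => i0 _.
    rewrite mxE (bas_neg hs) // mxE ebasisE -natrM mulnb [i0 == j]eq_sym.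
    by congr (_ * (_ && _)%:R); case: eqP => e1; case: eqP => e2 //; exfalso; lia.
  under eq_bigr => k _ do rewrite (E k).
  case: (ltnP (absz (- n - 1)) Kb) => hk.
    rewrite (@sum2_pickM _ _ _ _ hk j (fun k i => f (- (k : nat)%:Z - 1) 0 i)
            (fun k i0 => (absz (- n - 1) == k) && (j == i0)) (fun _ _ => erefl)).
    by congr (f _ _ _); lia.
  rewrite hN; last by lia.
  rewrite mxE big1 // => k _; apply: big1 => i _.
  have -> : (absz (- n - 1) == k) = false by have := ltn_ord k; lia.
  by rewrite mulr0.
- apply: (lclosed_sum (gspan_closed r)) => k.
  apply: (lclosed_sum (gspan_closed r)) => i.
  by case: (gspan_closed r) => _ _ PZ; apply: PZ; apply: gspan_bas.
Qed.

Lemma nstd_complement (K : fieldType) d (r : nat -> int -> 'M[K]_d) r0 :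
  standard_form r (lam_one K) r0 -> taylor_complement (gspan r).
Proof.
move=> hs; split; first exact: nstd_decomp hs.
exact: nstd_unique hs.
Qed.

Lemma nstd_inj (K : fieldType) d (r1 r2 : nat -> int -> 'M[K]_d) r01 r02 :
  standard_form r1 (lam_one K) r01 -> standard_form r2 (lam_one K) r02 ->
  (forall f, gspan r1 f <-> gspan r2 f) -> forall k n, r1 k n = r2 k n.
Proof.
move=> hs1 hs2 heq k n; apply/matrixP => j i.
have h1 : gspan r2 (bas r1 k i) by apply/heq; apply: gspan_bas.
have h : gspan r2 (fun n => bas r1 k i n - bas r2 k i n).
  by apply: (lclosed_sub (gspan_closed r2)) => //; apply: gspan_bas.
have ht : taylor (fun n => bas r1 k i n - bas r2 k i n).
  by move=> m hm; rewrite (bas_neg hs1) // (bas_neg hs2) // subrr.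
have := nstd_unique hs2 h ht n; move/(congr1 (fun v : 'rV_d => v 0 j)).
by rewrite !mxE => /eqP; rewrite subr_eq0 => /eqP.
Qed.

Lemma r_small (K : fieldType) d (r : nat -> int -> 'M[K]_d) r0 :
  standard_form r (lam_one K) r0 -> forall k n i j, n < - k%:Z - 1 -> r k n i j = 0.
Proof.
move=> hs k n i j hn; rewrite (rneg_entry hs); last by lia.
by have -> : (n == - k%:Z - 1) = false by lia.
Qed.

Lemma r_off (K : fieldType) d (r : nat -> int -> 'M[K]_d) r0 :
  standard_form r (lam_one K) r0 -> forall k n i j, n < 0 -> n != - k%:Z - 1 -> r k n i j = 0.
Proof.
move=> hs k n i j hn hne; rewrite (rneg_entry hs) //.
by rewrite (negbTE hne).
Qed.

Lemma r_at (K : fieldType) d (r : nat -> int -> 'M[K]_d) r0 :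
  standard_form r (lam_one K) r0 -> forall k n i j, n = - k%:Z - 1 -> r k n i j = (i == j)%:R.
Proof.
move=> hs k n i j hn; rewrite (rneg_entry hs); last by lia.
by rewrite hn eqxx.
Qed.

Lemma T2_neg (K : fieldType) d (c : 'I_d -> 'I_d -> 'I_d -> K) (s : nat -> int -> 'M[K]_d) r0 :
  standard_form s (lam_one K) r0 -> forall n1 n2 k3 p q t, n1 < 0 ->
  cybe_term2 c s n1 n2 k3 p q t = \sum_l s k3 (n1 + n2 + 1) l t * c p l q.
Proof.
move=> hs n1 n2 k3 p q t hn1; rewrite /cybe_term2 (@isum_point _ _ _ (- n1 - 1)).
  case: ifP => hr.
    have E : forall j l, s (absz (- n1 - 1)) n1 p j * s k3 (n2 - (- n1 - 1)) l t * c j l q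
       = (p == j)%:R * (s k3 (n1 + n2 + 1) l t * c p l q).
      move=> j l; rewrite (r_at hs); last by lia.
      have -> : n2 - (- n1 - 1) = n1 + n2 + 1 by lia.
      by case: eqP => [->|_]; rewrite ?mul1r ?mul0r ?mulrA.
    under eq_bigr => j _ do under eq_bigr => l _ do rewrite E.
    under eq_bigr => j _ do rewrite -mulr_sumr.
    by rewrite sum_delta.
  symmetry; apply: big1 => l _; rewrite (r_small hs) ?mul0r //.
  by move/negbT: hr; rewrite negb_and -!ltNge; case/orP; lia.
move=> b hb1 hb2 hb; apply: big1 => j _; apply: big1 => l _.
by rewrite (r_off hs) ?mul0r //; lia.
Qed.

Lemma T1_neg (K : fieldType) d (c : 'I_d -> 'I_d -> 'I_d -> K) (s : nat -> int -> 'M[K]_d) r0 :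
  standard_form s (lam_one K) r0 -> forall n1 n2 k3 p q t, n1 < 0 -> 0 <= n2 ->
  cybe_term1 c s n1 n2 k3 p q t =
    \sum_l s k3 (n1 + n2 + 1) l t * c q l p +
    (if 0 <= n1 + k3%:Z + 1 then \sum_i s (absz n2) (n1 + k3%:Z + 1) i q * c i t p else 0).
Proof.
move=> hs n1 n2 k3 p q t hn1 hn2; rewrite /cybe_term1.
have -> : (n2 < 0) = false by lia.
set F1 := fun a => \sum_i \sum_l s (absz n2) a i q * s k3 (n1 - a) l t * c i l p.
rewrite (@isum_ext _ _ _ _ (fun a => (if a < 0 then F1 a else 0) + (if a < 0 then 0 else F1 a)));
  last by move=> a; case: ifP; rewrite ?addr0 ?add0r.
rewrite isum_add; congr (_ + _).
  rewrite (@isum_point _ _ _ (- n2 - 1)); last first.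
    move=> a ha1 ha2 hne; case: ifP => // ha; apply: big1 => i _; apply: big1 => l _.
    by rewrite (r_off hs) ?mul0r //; lia.
  have -> : (- n2 - 1 < 0) = true by lia.
  case: ifP => hr.
    rewrite /F1.
    have E : forall i l, s (absz n2) (- n2 - 1) i q * s k3 (n1 - (- n2 - 1)) l t * c i l p
       = (q == i)%:R * (s k3 (n1 + n2 + 1) l t * c q l p).
      move=> i l; rewrite (r_at hs); last by lia.
      have -> : n1 - (- n2 - 1) = n1 + n2 + 1 by lia.
      by rewrite eq_sym; case: eqP => [->|_]; rewrite ?mul1r ?mul0r ?mulrA.
    under eq_bigr => i _ do under eq_bigr => l _ do rewrite E.
    under eq_bigr => i _ do rewrite -mulr_sumr.
    by rewrite sum_delta.
  symmetry; apply: big1 => l _; rewrite (r_small hs) ?mul0r //.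
  by move/negbT: hr; rewrite negb_and -!ltNge; case/orP; lia.
rewrite (@isum_point _ _ _ (n1 + k3%:Z + 1)); last first.
  move=> a ha1 ha2 hne; case: ifP => // ha; apply: big1 => i _; apply: big1 => l _.
  by rewrite [s k3 _ l t](r_off hs) ?mulr0 ?mul0r //; lia.
case: (ltP (n1 + k3%:Z + 1) 0) => h0.
  by case: ifP.
have -> : (- n2 - 1 <= n1 + k3%:Z + 1) && (n1 + k3%:Z + 1 <= n1 + k3%:Z + 1) by apply/andP; split; lia.
rewrite /F1; apply: eq_bigr => i _.
have E : forall l, s (absz n2) (n1 + k3%:Z + 1) i q * s k3 (n1 - (n1 + k3%:Z + 1)) l t * c i l p
   = (t == l)%:R * (s (absz n2) (n1 + k3%:Z + 1) i q * c i t p).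
  move=> l; rewrite [s k3 _ l t](r_at hs); last by lia.
  case: (t =P l) => [->|ne]; first by rewrite !eqxx mulr1 mul1r.
  have -> : (l == t) = false by apply/eqP => e; apply: ne; rewrite e.

  by rewrite mulr0 !mul0r.
under eq_bigr => l _ do rewrite E.
by rewrite sum_delta.
Qed.

Lemma rbar_entry (K : fieldType) d (s : nat -> int -> 'M[K]_d) r0 :
  standard_form s (lam_one K) r0 -> forall (k : nat) n2 q u,
  rbar (lam_one K) r0 k n2 q u =
  (n2 + k%:Z + 1 == 0)%:R * (q == u)%:R -
  (if 0 <= n2 then s (absz n2) k%:Z u q else 0).
Proof.
move=> hs k n2 q u; rewrite /rbar !mxE cauchy_x_one.
case: ifP => h; last by rewrite mxE.
by rewrite mxE (rpos hs).
Qed.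

Lemma T3_neg (K : fieldType) d (c : 'I_d -> 'I_d -> 'I_d -> K) (s : nat -> int -> 'M[K]_d) r0 :
  standard_form s (lam_one K) r0 -> forall n1 n2 k3 p q t, n1 < 0 ->
  cybe_term3 c s (rbar (lam_one K) r0) n1 n2 k3 p q t =
  if 0 <= n1 + k3%:Z + 1 then
    (n2 + n1 + k3%:Z + 2 == 0)%:R * c p q t -
    (if 0 <= n2 then \sum_u s (absz n2) (n1 + k3%:Z + 1) u q * c p u t else 0)
  else 0.
Proof.
move=> hs n1 n2 k3 p q t hn1; rewrite /cybe_term3.
case: ifP => h0; last first.
  apply: big1 => k _; apply: big1 => m _; apply: big1 => u _.
  rewrite (r_off hs) ?mul0r //.
  by move/negbT: h0; rewrite -ltNge; have := ltn_ord k; lia.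
have hk0 : (absz (- n1 - 1) < k3.+1)%N by lia.
rewrite (bigD1 (Ordinal hk0)) //= [X in _ + X]big1 ?addr0; last first.
  move=> k hk; apply: big1 => m _; apply: big1 => u _.
  rewrite (r_off hs) ?mul0r //; apply/eqP => e; move/eqP: hk; apply.
  by apply/val_inj => /=; lia.
have E : forall m u, s (absz (- n1 - 1)) n1 p m *
     rbar (lam_one K) r0 (k3 - absz (- n1 - 1)) n2 q u * c m u t =
   (p == m)%:R * (((n2 + n1 + k3%:Z + 2 == 0)%:R * (q == u)%:R -
      (if 0 <= n2 then s (absz n2) (n1 + k3%:Z + 1) u q else 0)) * c p u t).
  move=> m u; rewrite (r_at hs); last by lia.
  rewrite (rbar_entry hs).
  have -> : (n2 + (k3 - absz (- n1 - 1))%N%:Z + 1 == 0) = (n2 + n1 + k3%:Z + 2 == 0).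
    by case: eqP => e1; case: eqP => e2 //; exfalso; lia.
  have -> : (k3 - absz (- n1 - 1))%N%:Z = n1 + k3%:Z + 1 by lia.
  by case: eqP => [->|_]; rewrite ?mul1r ?mul0r.
under eq_bigr => m _ do under eq_bigr => u _ do rewrite E.
under eq_bigr => m _ do rewrite -mulr_sumr.
rewrite sum_delta.
rewrite (eq_bigr (fun u => ((n2 + n1 + k3%:Z + 2 == 0)%:R * (q == u)%:R) * c p u t - (if 0 <= n2 then s (absz n2) (n1 + k3%:Z + 1) u q else 0) * c p u t)); last by move=> u _; rewrite mulrBl.
rewrite sumrB; congr (_ - _).
  under eq_bigr => u _ do rewrite -mulrA.
  rewrite -mulr_sumr; congr (_ * _).
  by rewrite sum_delta.
by case: ifP => _; [| rewrite big1 // => u _; rewrite mul0r].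
Qed.

Lemma S_neg (K : fieldType) d (c : 'I_d -> 'I_d -> 'I_d -> K) (s : nat -> int -> 'M[K]_d) r0 :
  (forall i j k, c i j k = c j k i) -> (forall i j k, c i j k = - c j i k) ->
  standard_form s (lam_one K) r0 -> forall n1 n2 k3 p q t, n1 < 0 ->
  cybe_term1 c s n1 n2 k3 p q t + cybe_term2 c s n1 n2 k3 p q t
  + cybe_term3 c s (rbar (lam_one K) r0) n1 n2 k3 p q t = 0.
Proof.
move=> hcyc hanti hs n1 n2 k3 p q t hn1.
rewrite (T2_neg c hs) // (T3_neg c hs) //.
case: (ltP n2 0) => hn2.
  rewrite /cybe_term1 hn2 add0r.
  case: (n1 + n2 + 1 =P - k3%:Z - 1) => e.
    rewrite (bigD1 t) //= big1 ?addr0; last first.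
      by move=> l /negbTE hl; rewrite (r_at hs) // hl mul0r.
    rewrite (r_at hs) // eqxx mul1r.
    have -> : (0 <= n1 + k3%:Z + 1) = true by lia.
    have -> : (n2 + n1 + k3%:Z + 2 == 0) = true by lia.
    rewrite mul1r subr0 hcyc hanti hcyc hcyc; exact: addNr.
  rewrite big1 ?add0r; last by move=> l _; rewrite (r_off hs) ?mul0r //; lia.
  case: ifP => // _; have -> : (n2 + n1 + k3%:Z + 2 == 0) = false by lia.
  by rewrite mul0r subr0.
rewrite (T1_neg c hs) //.
have E : \sum_l s k3 (n1 + n2 + 1) l t * c q l p + \sum_l s k3 (n1 + n2 + 1) l t * c p l q = 0.
  rewrite -big_split big1 //= => l _.
  by rewrite -mulrDr [c p l q]hcyc [c l q p]hanti addrN mulr0.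
rewrite [X in X + _]addrAC E add0r.
case: ifP => h0; last by rewrite addr0.
have -> : (n2 + n1 + k3%:Z + 2 == 0) = false by lia.
rewrite mul0r sub0r.
apply/eqP; rewrite subr_eq0; apply/eqP; apply: eq_bigr => i _.
by rewrite hcyc [c t p i]hcyc.
Qed.

Lemma lie0l (K : fieldType) d (c : 'I_d -> 'I_d -> 'I_d -> K) v : lie c 0 v = 0.
Proof. by have := lie_scalel c 0 0 v; rewrite !scale0r. Qed.

Lemma lie0r (K : fieldType) d (c : 'I_d -> 'I_d -> 'I_d -> K) v : lie c v 0 = 0.
Proof. by have := lie_scaler c 0 v 0; rewrite !scale0r. Qed.

Lemma lie_suml (K : fieldType) d (c : 'I_d -> 'I_d -> 'I_d -> K) m (F : 'I_m -> 'rV[K]_d) v :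
  lie c (\sum_(t < m) F t) v = \sum_(t < m) lie c (F t) v.
Proof. exact: (big_morph (fun x => lie c x v) (fun x y => lie_addl c x y v) (lie0l c v)). Qed.

Lemma lie_sumr (K : fieldType) d (c : 'I_d -> 'I_d -> 'I_d -> K) m (F : 'I_m -> 'rV[K]_d) v :
  lie c v (\sum_(t < m) F t) = \sum_(t < m) lie c v (F t).
Proof. exact: (big_morph (fun x => lie c v x) (fun x y => lie_addr c v x y) (lie0r c v)). Qed.

Lemma lbr_window (K : fieldType) d (c : 'I_d -> 'I_d -> 'I_d -> K) (N M : nat) f g :
  vanish_below N f -> vanish_below N g -> (N <= M)%N ->
  forall n, lbr c N f g n = lbr c M f g n.
Proof.
move=> hf hg hNM n; rewrite /lbr; symmetry; apply: isum_window; try lia.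
move=> a ha1 ha2 [ha|ha].
  by rewrite hf ?lie0l //; lia.
by rewrite hg ?lie0r //; lia.
Qed.

Lemma lbr_bilin (K : fieldType) d (c : 'I_d -> 'I_d -> 'I_d -> K) (M : nat) m1 m2
  (a : 'I_m1 -> K) (b : 'I_m2 -> K) (F : 'I_m1 -> int -> 'rV[K]_d) (G : 'I_m2 -> int -> 'rV[K]_d) n :
  lbr c M (fun x => \sum_(t < m1) a t *: F t x) (fun x => \sum_(u < m2) b u *: G u x) n =
  \sum_(t < m1) \sum_(u < m2) (a t * b u) *: lbr c M (F t) (G u) n.
Proof.
rewrite /lbr.
under isum_ext => x do (rewrite lie_suml; under eq_bigr => t _ do rewrite lie_sumr).
rewrite isum_sum; apply: eq_bigr => t _.
under isum_ext => x do under eq_bigr => u _ do rewrite lie_scalel lie_scaler scalerA.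
rewrite isum_sum; apply: eq_bigr => u _.
by rewrite isum_scale.
Qed.

Lemma vanish_bas (K : fieldType) d (s : nat -> int -> 'M[K]_d) r0 :
  standard_form s (lam_one K) r0 -> forall k i (N : nat), (k < N)%N -> vanish_below N (bas s k i).
Proof.
move=> hs k i N hk n hn; rewrite (bas_neg hs); last by lia.
have -> : (n == - k%:Z - 1) = false by lia.
by rewrite scale0r.
Qed.

Lemma V2_comb (K : fieldType) d (c : 'I_d -> 'I_d -> 'I_d -> K) (s : nat -> int -> 'M[K]_d)
  n1 n2 k3 q t :
  \row_p cybe_term2 c s n1 n2 k3 p q t =
  isum 0 (n2 + k3%:Z + 1) (fun b => \sum_j (\sum_l s k3 (n2 - b) l t * c j l q) *: bas s (absz b) j n1).
Proof.
apply/rowP => p; rewrite mxE isum_mxE /cybe_term2; apply: isum_ext => b.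
rewrite summxE; apply: eq_bigr => j _; rewrite !mxE mulr_suml; apply: eq_bigr => l _.
by ring.
Qed.

Lemma V3_comb (K : fieldType) d (c : 'I_d -> 'I_d -> 'I_d -> K) (s sb : nat -> int -> 'M[K]_d)
  n1 n2 k3 q t :
  \row_p cybe_term3 c s sb n1 n2 k3 p q t =
  \sum_(k < k3.+1) \sum_m (\sum_u sb (k3 - k)%N n2 q u * c m u t) *: bas s k m n1.
Proof.
apply/rowP => p; rewrite mxE /cybe_term3 summxE; apply: eq_bigr => k _.
rewrite summxE; apply: eq_bigr => m _; rewrite !mxE mulr_suml; apply: eq_bigr => u _.
by ring.
Qed.

Lemma V1_lbr (K : fieldType) d (c : 'I_d -> 'I_d -> 'I_d -> K) (s : nat -> int -> 'M[K]_d) r0 :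
  standard_form s (lam_one K) r0 -> forall (M : nat) n1 n2 k3 q t,
  0 <= n2 -> (absz n2 < M)%N -> (k3 < M)%N ->
  \row_p cybe_term1 c s n1 n2 k3 p q t = lbr c M (bas s (absz n2) q) (bas s k3 t) n1.
Proof.
move=> hs M n1 n2 k3 q t hn2 h1 h2; apply/rowP => p; rewrite mxE /cybe_term1.
have -> : (n2 < 0) = false by lia.
rewrite /lbr isum_mxE; symmetry.
rewrite (@isum_window _ (- n2 - 1) (n1 + k3%:Z + 1)); try lia.
  apply: isum_ext => a; rewrite lie_entry; apply: eq_bigr => i _; apply: eq_bigr => l _.
  by rewrite !mxE.
move=> a ha1 ha2 [ha|ha]; rewrite lie_entry; apply: big1 => i _; apply: big1 => l _.
  by rewrite mxE (r_off hs) ?mul0r //; lia.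
by rewrite [bas s k3 t _ 0 l]mxE (r_off hs) ?mulr0 ?mul0r //; lia.
Qed.

Lemma P_V2 (K : fieldType) d (c : 'I_d -> 'I_d -> 'I_d -> K) (s : nat -> int -> 'M[K]_d)
  (P : (int -> 'rV[K]_d) -> Prop) n2 k3 q t :
  lclosed P -> (forall k i, P (bas s k i)) ->
  P (fun n1 => \row_p cybe_term2 c s n1 n2 k3 p q t).
Proof.
move=> hP hb.
replace (fun n1 => \row_p cybe_term2 c s n1 n2 k3 p q t) with
  (fun n1 => isum 0 (n2 + k3%:Z + 1) (fun b => \sum_j (\sum_l s k3 (n2 - b) l t * c j l q) *: bas s (absz b) j n1)).
  2: by apply: functional_extensionality => n1; rewrite V2_comb.
apply: (@lclosed_isum _ _ _ _ _ (fun b n1 => \sum_j (\sum_l s k3 (n2 - b) l t * c j l q) *: bas s (absz b) j n1) hP) => b.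
apply: (@lclosed_sum _ _ _ _ (fun j n1 => (\sum_l s k3 (n2 - b) l t * c j l q) *: bas s (absz b) j n1) hP) => j.
by case: hP => _ _ PZ; apply: PZ.
Qed.

Lemma P_V3 (K : fieldType) d (c : 'I_d -> 'I_d -> 'I_d -> K) (s sb : nat -> int -> 'M[K]_d)
  (P : (int -> 'rV[K]_d) -> Prop) n2 k3 q t :
  lclosed P -> (forall k i, P (bas s k i)) ->
  P (fun n1 => \row_p cybe_term3 c s sb n1 n2 k3 p q t).
Proof.
move=> hP hb.
replace (fun n1 => \row_p cybe_term3 c s sb n1 n2 k3 p q t) with
  (fun n1 => \sum_(k < k3.+1) \sum_m (\sum_u sb (k3 - k)%N n2 q u * c m u t) *: bas s k m n1).
  2: by apply: functional_extensionality => n1; rewrite V3_comb.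
apply: (@lclosed_sum _ _ _ _ (fun k n1 => \sum_m (\sum_u sb (k3 - k)%N n2 q u * c m u t) *: bas s k m n1) hP) => k.
apply: (@lclosed_sum _ _ _ _ (fun m n1 => (\sum_u sb (k3 - k)%N n2 q u * c m u t) *: bas s k m n1) hP) => m.
by case: hP => _ _ PZ; apply: PZ.
Qed.

Lemma gspan_lbr_bas (K : fieldType) d (c : 'I_d -> 'I_d -> 'I_d -> K) (r : nat -> int -> 'M[K]_d) r0 :
  standard_form r (lam_one K) r0 -> gen_cybe c r (rbar (lam_one K) r0) ->
  forall (M k1 k2 : nat) i1 i2, (k1 < M)%N -> (k2 < M)%N ->
  gspan r (lbr c M (bas r k1 i1) (bas r k2 i2)).
Proof.
move=> hs hc M k1 k2 i1 i2 h1 h2.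
replace (lbr c M (bas r k1 i1) (bas r k2 i2)) with
  (fun n1 => (-1) *: ((\row_p cybe_term2 c r n1 k1%:Z k2 p i1 i2) +
                      (\row_p cybe_term3 c r (rbar (lam_one K) r0) n1 k1%:Z k2 p i1 i2))).
  have hP := gspan_closed r; case: (hP) => _ PD PZ; apply: PZ.
  apply: PD; [exact: P_V2 (gspan_bas r) | exact: P_V3 (gspan_bas r)].
apply: functional_extensionality => n1.
rewrite -(@V1_lbr K d c r r0 hs M n1 k1%:Z k2 i1 i2) //; apply/rowP => p; rewrite !mxE.
have := hc n1 k1%:Z k2 p i1 i2; move/eqP; rewrite -addrA addrC addr_eq0 => /eqP ->.
by rewrite mulN1r opprK.
Qed.

Lemma gspan_lbr (K : fieldType) d (c : 'I_d -> 'I_d -> 'I_d -> K) (r : nat -> int -> 'M[K]_d) r0 :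
  standard_form r (lam_one K) r0 -> gen_cybe c r (rbar (lam_one K) r0) ->
  forall f g (N : nat), gspan r f -> gspan r g -> vanish_below N f -> vanish_below N g ->
  gspan r (lbr c N f g).
Proof.
move=> hs hc f g N [m1 [ks1 [is1 [cs1 H1]]]] [m2 [ks2 [is2 [cs2 H2]]]] hf hg.
set M := (N + \max_(t < m1) ks1 t + \max_(u < m2) ks2 u).+1.
replace (lbr c N f g) with (lbr c M f g).
  2: by apply: functional_extensionality => n; rewrite (@lbr_window _ _ c N M f g hf hg) //; rewrite /M; lia.
have ef : f = fun x => \sum_(t < m1) cs1 t *: bas r (ks1 t) (is1 t) x.
  by apply: functional_extensionality => x; rewrite H1.
have eg : g = fun x => \sum_(u < m2) cs2 u *: bas r (ks2 u) (is2 u) x.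
  by apply: functional_extensionality => x; rewrite H2.
rewrite ef eg.
replace (lbr c M _ _) with (fun n => \sum_(t < m1) \sum_(u < m2)
   (cs1 t * cs2 u) *: lbr c M (bas r (ks1 t) (is1 t)) (bas r (ks2 u) (is2 u)) n).
  2: by apply: functional_extensionality => n; rewrite lbr_bilin.
have hP := gspan_closed r.
apply: (@lclosed_sum _ _ _ _ (fun t n => \sum_(u < m2)
   (cs1 t * cs2 u) *: lbr c M (bas r (ks1 t) (is1 t)) (bas r (ks2 u) (is2 u)) n) hP) => t.
apply: (@lclosed_sum _ _ _ _ (fun u n =>
   (cs1 t * cs2 u) *: lbr c M (bas r (ks1 t) (is1 t)) (bas r (ks2 u) (is2 u)) n) hP) => u.
case: (hP) => _ _ PZ; apply: PZ; apply: (gspan_lbr_bas hs hc).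
  have : (ks1 t <= \max_(t0 < m1) ks1 t0)%N by exact: leq_bigmax. rewrite /M; lia.
have : (ks2 u <= \max_(t0 < m2) ks2 t0)%N by exact: leq_bigmax. rewrite /M; lia.
Qed.

Lemma forward (K : fieldType) d (c : 'I_d -> 'I_d -> 'I_d -> K) r :
  normalized_formal_gen_rmatrix c r ->
  lie_subalgebra c (gspan r) /\ taylor_complement (gspan r).
Proof.
move=> [r0 [hs hc]]; have [P0 PD PZ] := gspan_closed r; split; last exact: nstd_complement hs.
split => //; first exact: nstd_laurent hs.
by move=> f g N hf hg hvf hvg; apply: (gspan_lbr hs hc).
Qed.

Lemma W_lclosed (K : fieldType) d (c : 'I_d -> 'I_d -> 'I_d -> K) W :
  lie_subalgebra c W -> lclosed W.
Proof. by case. Qed.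

Definition deltaf (K : fieldType) d (k : nat) (i : 'I_d) : int -> 'rV[K]_d :=
  fun n => if n == - k%:Z - 1 then ebasis K i else 0.

Lemma delta_ex (K : fieldType) d (c : 'I_d -> 'I_d -> 'I_d -> K) W :
  lie_subalgebra c W -> taylor_complement W -> forall k i,
  exists w, W w /\ forall n, n < 0 -> w n = deltaf K k i n.
Proof.
move=> hW [hC1 hC2] k i.
have hl : laurent (deltaf K k i).
  exists (- k%:Z - 1) => n hn; rewrite /deltaf.
  by have -> : (n == - k%:Z - 1) = false by lia.
have [p [w [tp Ww E]]] := hC1 _ hl.
exists w; split => // n hn; rewrite E tp // add0r //.
Qed.

Definition wsel (K : fieldType) d (c : 'I_d -> 'I_d -> 'I_d -> K) W
  (hW : lie_subalgebra c W) (hC : taylor_complement W) (k : nat) (i : 'I_d) : int -> 'rV[K]_d :=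
  proj1_sig (constructive_indefinite_description _ (delta_ex hW hC k i)).

Lemma wselP (K : fieldType) d (c : 'I_d -> 'I_d -> 'I_d -> K) W
  (hW : lie_subalgebra c W) (hC : taylor_complement W) k i :
  W (wsel hW hC k i) /\ forall n, n < 0 -> wsel hW hC k i n = deltaf K k i n.
Proof. exact: proj2_sig (constructive_indefinite_description _ (delta_ex hW hC k i)). Qed.

Lemma surjective (K : fieldType) d (c : 'I_d -> 'I_d -> 'I_d -> K) :
  (forall i j k, c i j k = c j k i) -> (forall i j k, c i j k = - c j i k) ->
  forall W, lie_subalgebra c W -> taylor_complement W ->
  exists r, normalized_formal_gen_rmatrix c r /\ (forall f, gspan r f <-> W f).
Proof.
move=> hcyc hanti W hW hC.
have hL := W_lclosed hW.
set r := fun k n => \matrix_(j, i) (wsel hW hC k i n) 0 j.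
have hbas : forall k i, bas r k i = wsel hW hC k i.
  move=> k i; apply: functional_extensionality => n; apply/rowP => j.
  by rewrite !mxE.
have hbW : forall k i, W (bas r k i) by move=> k i; rewrite hbas; case: (wselP hW hC k i).
set r0 := fun (a k : nat) => r k a%:Z.
have hs : standard_form r (lam_one K) r0.
  split; first by rewrite /lam_one eqxx oner_neq0.
  move=> k n; rewrite cauchy_y_one; case: (ltP n 0) => hn.
    rewrite addr0; apply/matrixP => j i; rewrite !mxE.
    case: (wselP hW hC k i) => _ -> //; rewrite /deltaf.
    case: (n == - k%:Z - 1); last by rewrite mxE mul0r.
    by rewrite ebasisE eq_sym mul1r.
  have -> : (n == - k%:Z - 1) = false by lia.
  rewrite scale0r add0r /r0.
  by have -> : (absz n)%:Z = n by lia.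
have hcy : gen_cybe c r (rbar (lam_one K) r0).
  move=> n1 n2 k3 p q t.
  set S := fun n1 => \row_p (cybe_term1 c r n1 n2 k3 p q t + cybe_term2 c r n1 n2 k3 p q t
     + cybe_term3 c r (rbar (lam_one K) r0) n1 n2 k3 p q t).
  have hS : W S.
    have [hD0 hDD hDZ] := hL.
    replace S with (fun n1 => (\row_p cybe_term1 c r n1 n2 k3 p q t +
       \row_p cybe_term2 c r n1 n2 k3 p q t) + \row_p cybe_term3 c r (rbar (lam_one K) r0) n1 n2 k3 p q t).
      2: by apply: functional_extensionality => n1'; apply/rowP => p'; rewrite !mxE.
    refine (hDD _ _ _ _); last exact: P_V3.
    refine (hDD _ _ _ _); last exact: P_V2.
    case: (ltP n2 0) => hn2.
      replace (fun n1 => \row_p cybe_term1 c r n1 n2 k3 p q t) with (fun _ : int => 0 : 'rV[K]_d) => //.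
      apply: functional_extensionality => n1'; apply/rowP => p'; rewrite !mxE /cybe_term1.
      by have -> : (n2 < 0) = true by lia.
    set M := (absz n2 + k3).+1.
    replace (fun n1 => \row_p cybe_term1 c r n1 n2 k3 p q t) with
      (lbr c M (bas r (absz n2) q) (bas r k3 t)).
      2: by apply: functional_extensionality => n1'; rewrite (@V1_lbr K d c r r0 hs M n1' n2 k3 q t) // /M; lia.
    have [_ _ _ _ hbr] := hW; refine (hbr _ _ _ _ _ _ _) => //.
      by apply: (vanish_bas hs); rewrite /M; lia.
    by apply: (vanish_bas hs); rewrite /M; lia.
  have tS : taylor S.
    move=> m hm; apply/rowP => p'; rewrite !mxE (S_neg hcyc hanti hs) //.
  have := hC.2 S hS tS n1; move/(congr1 (fun v : 'rV_d => v 0 p)).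
  by rewrite !mxE.
exists r; split; first by exists r0.
move=> f; split; first exact: (@gspan_sub K d r W hL hbW f).
move=> hf; have hl : laurent f by have [hlau _ _ _ _] := hW; exact: hlau.
have [p [w [tp gw E]]] := nstd_decomp hs hl.
have Ww : W w := @gspan_sub K d r W hL hbW w gw.
have hp : W (fun n => f n - w n) := lclosed_sub hL hf Ww.
have tp' : taylor (fun n => f n - w n) by move=> n hn; rewrite E tp // add0r subrr.
have hz := hC.2 _ hp tp'.
replace f with w => //.
apply: functional_extensionality => n; apply/eqP; rewrite eq_sym -subr_eq0; apply/eqP; exact: hz.
Qed.

Unset Implicit Arguments.

Theorem proposition1p9 (K : fieldType) (d : nat) (c : 'I_d -> 'I_d -> 'I_d -> K)
  (charK : [pchar K] =i pred0)
  (hlie : is_lie_algebra c) (hss : semisimple c) (hon : killing_orthonormal c) :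
  (* r |-> g(r) maps normalized formal generalized r-matrices to Lie     *)
  (* subalgebras W with g((z)) = g[[z]] (+) W ...                        *)
  (forall r, normalized_formal_gen_rmatrix c r ->
     lie_subalgebra c (gspan r) /\ taylor_complement (gspan r)) /\
  (* ... injectively ... *)
  (forall r1 r2, normalized_formal_gen_rmatrix c r1 ->
     normalized_formal_gen_rmatrix c r2 ->
     (forall f, gspan r1 f <-> gspan r2 f) ->
     forall (k : nat) (n : int), r1 k n = r2 k n) /\
  (* ... and surjectively. *)
  (forall W : (int -> 'rV[K]_d) -> Prop,
     lie_subalgebra c W -> taylor_complement W ->
     exists r, normalized_formal_gen_rmatrix c r /\ (forall f, gspan r f <-> W f)).
Proof.
have hcyc := c_cyc hlie hon.
have hanti := c_anti hlie.
split; first by move=> r hr; exact: forward hr.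
split; last exact: surjective hcyc hanti.
move=> r1 r2 [r01 [hs1 _]] [r02 [hs2 _]] heq; exact: nstd_inj hs1 hs2 heq.
Qed.
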